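(* Let $a,b>1$ be such that $\log_b(a)\in\mathbb{Q}$, and write $\log_b(a)=q/p$ with $p,q$ relatively prime positive integers. Then, as operators from $L^2(\mathbb{R}_+)$ to $L^2(\mathbb{R})$, for all $s,m\in\mathbb{Z}$, \[ D_\varphi D_{a^{sq}} = T_{-sp} D_\varphi \qquad\text{and}\qquad D_\varphi M_{\gamma_m} = e^{2\pi i m/(b-1)}\, M_{m} D_\varphi . \]
   Context: For $b>1$ and $m\in\mathbb{Z}$, $\gamma_m:\mathbb{R}_+\to\mathbb{C}$ is the function satisfying $\gamma_m(bx)=\gamma_m(x)$ for all $x>0$ and $\gamma_m(x)=e^{2\pi i m x/(b-1)}$ for $x\in[1,b)$. For a bounded function $\eta$, $M_\eta$ denotes multiplication by $\eta$ (on $L^2(\mathbb{R}_+)$ or $L^2(\mathbb{R})$); for a real number $c$, $M_c$ on $L^2(\mathbb{R})$ is multiplication by $x\mapsto e^{2\pi i c x}$. For $a>0$, $D_a f(x)=a^{1/2}f(ax)$ (on $L^2(\mathbb{R}_+)$ or $L^2(\mathbb{R})$), and for $c\in\mathbb{R}$, $T_c f(x)=f(x-c)$ on $L^2(\mathbb{R})$. The function $\varphi:\mathbb{R}\to\mathbb{R}_+$ is defined by $\varphi(x)=b^k\big((b-1)x+(1-(b-1)k)\big)$ for $x\in[k,k+1)$, $k\in\mathbb{Z}$ (the piecewise linear interpolant of the points $(k,b^k)$), and $D_\varphi:L^2(\mathbb{R}_+)\to L^2(\mathbb{R})$ is the (unitary) operator $(D_\varphi h)(x)=\sqrt{\varphi'(x)}\,h(\varphi(x))$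 for a.e. $x\in\mathbb{R}$. *)

(* Defs.v *)
From mathcomp Require Import all_boot all_algebra.
From mathcomp Require Export complex.
From mathcomp Require Export all_classical all_reals all_analysis.
Import GRing.Theory Num.Theory.
Set Implicit Arguments.
Unset Strict Implicit.
Local Open Scope ring_scope.
Local Open Scope complex_scope.

Section Defs.
Variable R : realType.

Definition expi (t : R) : R[i] := (cos t +i* sin t).

Definition echar (c x : R) : R[i] := expi (2 * pi * c * x).

(* gamma_m : R_+ -> C, b-dilation invariant, equal to e^{2 pi i m x/(b-1)} on [1,b).
   For x > 0 let k = floor(log_b x), so that b^k <= x < b^(k+1) and x / b^k in [1,b). *)
Definition gamma_ (b : R) (m : int) (x : R) : R[i] :=
  let k : int := Num.floor (ln x / ln b) in
  expi (2 * pi * m%:~R * (x / b ^ k) / (b - 1)).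

(* piecewise linear interpolant of the points (k, b^k) *)
Definition phi (b : R) (x : R) : R :=
  let k : int := Num.floor x in
  b ^ k * ((b - 1) * x + (1 - (b - 1) * k%:~R)).

Definition Dphi (b : R) (h : R -> R[i]) (x : R) : R[i] :=
  (Num.sqrt (derive1 (phi b) x))%:C * h (phi b x).

Definition Dil (a : R) (f : R -> R[i]) (x : R) : R[i] :=
  (Num.sqrt a)%:C * f (a * x).

Definition Tr (c : R) (f : R -> R[i]) (x : R) : R[i] := f (x - c).

Definition Mfun (eta : R -> R[i]) (f : R -> R[i]) (x : R) : R[i] := eta x * f x.

Definition Mc (c : R) (f : R -> R[i]) (x : R) : R[i] := echar c x * f x.

End Defs.

(* Main.v *)
Require Import Defs.
From mathcomp Require Import all_boot all_algebra.
From mathcomp Require Import complex.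
From mathcomp Require Import all_classical all_reals all_analysis.
From mathcomp Require Import ring lra.
Import order.Order.TTheory GRing.Theory Num.Theory numFieldNormedType.Exports.
Local Open Scope ring_scope.
Local Open Scope complex_scope.
Section H.
Variable R : realType.

Lemma expiD (x y : R) : expi (x + y) = expi x * expi y.
Proof. rewrite /expi cosD sinD; apply/eqP; rewrite eq_complex /= (addrC (cos x * sin y)) !eqxx //. Qed.

Lemma expi_int (x : R) (n : int) : expi (x + 2 * pi * n%:~R) = expi x.
Proof.
have H : forall (y : R) (k : nat), expi (y + 2 * pi * k%:R) = expi y.
  move=> y k; rewrite /expi mulr_natr mulr_natl.
  by rewrite (periodicn (@cosD2pi R)) (periodicn (@sinD2pi R)).
case: n => k.
  by rewrite -pmulrn H.
rewrite NegzE mulrN.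
by rewrite -[in RHS](subrK (2 * pi * (k.+1)%:~R) x) H.
Qed.

Lemma countable_ints : countable (range (fun n : int => n%:~R : R)).
Proof.
apply: card_le_trans (card_image_le _ _) _.
exact: countableP.
Qed.
Lemma affine_derive (al be x : R) : derive1 (fun y : R => al * y + be) x = al.
Proof.
rewrite derive1E.
have H : is_derive x (1:R) (fun y : R => al * y + be) al.
  apply: is_derive_eq.
  by rewrite addr0 -[RHS]mulr1.
by rewrite derive_val.
Qed.
Lemma phi_shift (b x : R) (n : int) : b != 0 ->
  phi b (x + n%:~R) = b ^ n * phi b x.
Proof.
move=> b0; rewrite /phi floorDrz ?intr_int // intrKfloor expfzDr // rmorphD /=.
ring.
Qed.

Lemma derive_phi (b x : R) : ~ range (fun n : int => n%:~R : R) x ->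
  derive1 (phi b) x = b ^ (Num.floor x) * (b - 1).
Proof.
move=> nx; set k := Num.floor x.
have kx : k%:~R < x.
  rewrite lt_neqAle floor_le andbT; apply/negP => /eqP e; apply: nx; by exists k.
have xk : x < (k + 1)%:~R by exact: floorD1_gt.
have ne : \forall y \near x, phi b y = b ^ k * (b - 1) * y + b ^ k * (1 - (b - 1) * k%:~R).
  near=> y.
  have : y \in `]k%:~R, (k + 1)%:~R[.
    by near: y; apply: near_in_itvoo; rewrite in_itv /= kx xk.
  rewrite in_itv /= => /andP[h1 h2].
  rewrite /phi (_ : Num.floor y = k); last by apply: floor_def; rewrite (ltW h1) h2.
  by rewrite mulrDr mulrA.
rewrite derive1E (near_eq_derive _ ne) -derive1E.
exact: affine_derive.
Unshelve. all: by end_near.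
Qed.
Lemma lnXz (b : R) (k : int) : 0 < b -> ln (b ^ k) = k%:~R * ln b.
Proof.
move=> b0; case: k => n.
  by rewrite -exprnP lnXn // mulr_natl.
rewrite NegzE /= lnV ?lnXn ?exprn_gt0 // ?posrE ?exprn_gt0 //.
by rewrite mulNr mulr_natl.
Qed.

Lemma phi_floor (b x : R) :
  phi b x = b ^ (Num.floor x) * ((b - 1) * (x - (Num.floor x)%:~R) + 1).
Proof. rewrite /phi; congr (_ * _); ring. Qed.

Lemma gamma_phi (b x : R) (m : int) : 1 < b ->
  gamma_ b m (phi b x) = expi (2 * pi * m%:~R / (b - 1)) * echar m%:~R x.
Proof.
move=> b1; set k := Num.floor x.
set t := (b - 1) * (x - k%:~R) + 1.
have b0 : 0 < b by lra.
have bk0 : 0 < b ^ k by rewrite exprz_gt0.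
have t1 : 1 <= t.
  rewrite /t lerDr mulr_ge0 // ?subr_ge0 ?floor_le //; lra.
have tb : t < b.
  have : x - k%:~R < 1 by rewrite ltrBlDl -[1]/(1%:~R) -rmorphD floorD1_gt.
  rewrite /t => h; have hb : 0 < b - 1 by lra.
  have : (b - 1) * (x - k%:~R) < (b - 1) * 1 by rewrite ltr_pM2l.
  lra.
have t0 : 0 < t by lra.
have lb : 0 < ln b by rewrite ln_gt0.
have fl : Num.floor (ln (phi b x) / ln b) = k.
  rewrite phi_floor -/k -/t lnM ?posrE // lnXz // mulrDl mulfK ?gt_eqF //.
  apply: floor_def; rewrite lerDl rmorphD /= ltrD2l divr_ge0 ?ln_ge0 ?(ltW b1) //=.
  by rewrite rmorph1 ltr_pdivrMr // mul1r ltr_ln ?posrE.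
rewrite /gamma_ fl phi_floor -/k -/t [b ^ k * t]mulrC mulfK ?gt_eqF //.
rewrite /echar -expiD.
have -> : 2 * pi * m%:~R * t / (b - 1) =
  (2 * pi * m%:~R / (b - 1) + 2 * pi * m%:~R * x) + 2 * pi * (- (m * k))%:~R.
  rewrite /t rmorphN rmorphM /=; field; lra.
exact: expi_int.
Qed.
End H.

Theorem lemma2p1 (R : realType) (a b : R) (p q : nat) :
  1 < a -> 1 < b -> (0 < p)%N -> (0 < q)%N -> coprime p q ->
  ln b / ln a = q%:R / p%:R ->
  forall (s m : int) (h : R -> R[i]),
    {ae (@lebesgue_measure R), forall x : R,
       Dphi b (Dil (a ^ (s * q%:Z)) h) x = Tr (- (s * p%:Z)%:~R) (Dphi b h) x} /\
    {ae (@lebesgue_measure R), forall x : R,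
       Dphi b (Mfun (gamma_ b m) h) x
       = expi (2 * pi * m%:~R / (b - 1)) * Mc m%:~R (Dphi b h) x}.
Proof.
move=> a1 b1 p0 q0 _ hl s m h.
have a0 : 0 < a by lra.
have b0 : 0 < b by lra.
have la : 0 < ln a by rewrite ln_gt0.
have pn0 : p%:R != 0 :> R by rewrite pnatr_eq0 -lt0n.
have abq : a ^+ q = b ^+ p.
  apply: ln_inj; rewrite ?posrE ?exprn_gt0 //.
  have e : ln b = q%:R / p%:R * ln a by rewrite -hl mulfVK ?gt_eqF.
  by rewrite !lnXn // e -mulrnAl -mulr_natr mulfVK // mulr_natl.
set n := s * p%:Z.
have cE : a ^ (s * q%:Z) = b ^ n.
  by rewrite /n !(mulrC s) -!exprz_exp -!exprnP abq.
split.
  exists (range (fun n : int => n%:~R : R)); split.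
  - apply: countable_measurable; last exact: countable_ints.
    by move=> t; exact: measurable_set1.
  - exact: countable_lebesgue_measure0 (countable_ints R).
  move=> x /= nPx; apply: contrapT => nx; apply: nPx.
  rewrite /Dphi /Dil /Tr opprK.
  have nx' : ~ range (fun n : int => n%:~R : R) (x + n%:~R).
    move=> [j _ e]; apply: nx; exists (j - n) => //.
    by rewrite rmorphB /= e addrK.
  rewrite derive_phi // derive_phi // floorDrz ?intr_int // intrKfloor.
  rewrite phi_shift ?gt_eqF // cE expfzDr ?gt_eqF //.
  have bk : 0 <= b ^ Num.floor x * (b - 1) by rewrite mulr_ge0 ?exprz_ge0 //; lra.
  rewrite mulrA -rmorphM -sqrtrM //.
  by rewrite mulrAC.
apply: aeW => x.
rewrite /Dphi /Mfun /Mc gamma_phi //.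
by rewrite -!mulrA [LHS]mulrCA; congr (_ * _); exact: mulrCA.
Qed.
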